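(* Let $k$ be a field of characteristic two and let $\tau$ be a triangular involution of $k[x,y,z,w]$. Then there exists a $k$-algebra automorphism $\varphi$ of $k[x,y,z,w]$ such that $(\varphi^{-1}\circ\tau\circ\varphi)(x)=x$, $(\varphi^{-1}\circ\tau\circ\varphi)(y)=y+\phi_2'$, $(\varphi^{-1}\circ\tau\circ\varphi)(z)=z+\phi_3'$, $(\varphi^{-1}\circ\tau\circ\varphi)(w)=w+\phi_4'$, where $\phi_2'\in k[x]$, $\phi_3'\in k[x,y]$, $\phi_4'\in k[x,y,z]$, and $\phi_2',\phi_3'$ satisfy one of the following: (1) $\phi_2'=\phi_3'=0$; (2) $\phi_2'=0$ and $\phi_3'\neq 0$; (3) $\phi_2'\neq0$ and $\phi_3'\neq0$.
   Context: A $k$-algebra automorphism $\sigma$ of $k[x,y,z,w]$ is triangular if $\sigma(x)=\lambda_1x+\phi_1$, $\sigma(y)=\lambda_2y+\phi_2$, $\sigma(z)=\lambda_3z+\phi_3$, $\sigma(w)=\lambda_4w+\phi_4$ with $\lambda_i\in k\setminus\{0\}$, $\phi_1\in k$, $\phi_2\in k[x]$, $\phi_3\in k[x,y]$, $\phi_4\in k[x,y,z]$. An involution is an automorphism $\sigma$ with $\sigma^2=\mathrm{id}$. *)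

(* Defs.v *)
From mathcomp Require Import all_boot all_algebra.
From mathcomp Require Export mpoly.
Set Implicit Arguments. Unset Strict Implicit. Unset Printing Implicit Defensive.
Import GRing.Theory.
Local Open Scope ring_scope.

(* k[x,y,z,w] is {mpoly k[4]} with x = 'X_0, y = 'X_1, z = 'X_2, w = 'X_3. *)
Notation P4 k := {mpoly k[4]}.

Definition in_first_vars (k : fieldType) (j : nat) (p : P4 k) : Prop :=
  forall (m : 'X_{1..4}), m \in msupp p ->
    forall i : 'I_4, (j <= i)%N -> m i = 0%N.

Definition kalg_hom (k : fieldType) (f : P4 k -> P4 k) : Prop :=
  [/\ forall p q, f (p + q) = f p + f q,
      forall p q, f (p * q) = f p * f q,
      f 1 = 1 &
      forall (c : k) p, f (c *: p) = c *: f p].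

Definition kalg_aut (k : fieldType) (f : P4 k -> P4 k) : Prop :=
  kalg_hom f /\ bijective f.

Definition triangular (k : fieldType) (s : P4 k -> P4 k) : Prop :=
  kalg_aut s /\
  exists (l1 l2 l3 l4 : k) (c1 : k) (f2 f3 f4 : P4 k),
    [/\ [/\ l1 != 0, l2 != 0, l3 != 0 & l4 != 0],
        [/\ in_first_vars 1 f2, in_first_vars 2 f3 & in_first_vars 3 f4] &
        [/\ s 'X_0 = l1 *: 'X_0 + c1%:MP, s 'X_1 = l2 *: 'X_1 + f2,
            s 'X_2 = l3 *: 'X_2 + f3 & s 'X_3 = l4 *: 'X_3 + f4]].

Definition involution (k : fieldType) (s : P4 k -> P4 k) : Prop :=
  forall p, s (s p) = p.

(* Main.v *)
Require Import Defs.
From mathcomp Require Import all_boot all_algebra.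
From mathcomp Require Import mpoly.
From mathcomp Require Import ring.
Import GRing.Theory.
Local Open Scope ring_scope.
Set Warnings "-notation-overridden,-ambiguous-paths,-notation-incompatible-prefix".

Section Aux.
Variable k : fieldType.
Local Notation ifv := (@in_first_vars k).
Implicit Types (f g : P4 k -> P4 k) (p q : P4 k).

Lemma ifv0 j : ifv j 0.
Proof. by move=> m; rewrite mcoeff_msupp mcoeff0 eqxx. Qed.

Lemma ifvD j p q : ifv j p -> ifv j q -> ifv j (p + q).
Proof. by move=> hp hq m /msuppD_le; rewrite mem_cat => /orP [/hp|/hq]. Qed.

Lemma ifvZ j c p : ifv j p -> ifv j (c *: p).
Proof. by move=> hp m /msuppZ_le /hp. Qed.

Lemma ifvM j p q : ifv j p -> ifv j q -> ifv j (p * q).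
Proof.
move=> hp hq m /msuppM_le /allpairsP [[m1 m2] /= [h1 h2 ->]] i hi.
by rewrite mnmDE (hp _ h1 i hi) (hq _ h2 i hi).
Qed.

Lemma ifvC j c : ifv j c%:MP.
Proof.
move=> m; rewrite msuppC; case: eqP => _ //; rewrite inE => /eqP -> i _.
by rewrite mnm0E.
Qed.

Lemma ifv1 j : ifv j 1.
Proof. by rewrite -mpolyC1; apply: ifvC. Qed.

Lemma ifvX j (i : 'I_4) : (i < j)%N -> ifv j 'X_i.
Proof.
move=> hij m; rewrite msuppX inE => /eqP -> i' hi'; rewrite mnm1E.
case: eqP => // ei; subst i'; by move: (leq_trans hij hi'); rewrite ltnn.
Qed.

Lemma ifv_mono j j' p : (j <= j')%N -> ifv j p -> ifv j' p.
Proof. by move=> hjj hp m hm i hi; apply: hp hm i (leq_trans hjj hi). Qed.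

Lemma ifvX_not (i : 'I_4) : ~ ifv i 'X_i.
Proof.
move=> h; have hm : mnm1 i \in msupp ('X_i : P4 k) by rewrite msuppX mem_head.
have := h _ hm i (leqnn _).
by rewrite mnm1E eqxx.
Qed.

Lemma ifv4 p : ifv 4 p.
Proof. by move=> m _ i hi; have := ltn_ord i; rewrite ltnNge hi. Qed.

Lemma ifvX_pow j p n : ifv j p -> ifv j (p ^+ n).
Proof.
move=> hp; elim: n => [|n ih]; first by rewrite expr0; apply: ifv1.
by rewrite exprS; apply: ifvM.
Qed.

Lemma hom0 f : kalg_hom f -> f (0 : P4 k) = 0.
Proof. by rewrite /kalg_hom; case=> _ _ _ fZ; rewrite -(scale0r (0 : P4 k)) fZ !scale0r. Qed.

Lemma homC f c : kalg_hom f -> f (c%:MP : P4 k) = c%:MP.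
Proof.
rewrite /kalg_hom; case=> _ _ f1 fZ; by rewrite -alg_mpolyC fZ f1 alg_mpolyC.
Qed.

Lemma homX f p n : kalg_hom f -> f (p ^+ n) = f p ^+ n.
Proof.
rewrite /kalg_hom; case=> _ fM f1 _; elim: n => [|n ih]; first by rewrite !expr0 f1.
by rewrite !exprS fM ih.
Qed.

Lemma hom_expand f p : kalg_hom f ->
  f p = \sum_(m <- msupp p) p@_m *: \prod_(i < 4) f 'X_i ^+ m i.
Proof.
move=> hf; have [fD fM f1 fZ] := hf.
rewrite {1}[p]mpolyE (big_morph f fD (hom0 _ hf)); apply: eq_bigr => m _.
rewrite fZ mpolyXE_id (big_morph f fM f1); congr (_ *: _).
by apply: eq_bigr => i _; apply: homX.
Qed.

Lemma hom_agree f g (i : nat) p : kalg_hom f -> kalg_hom g ->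
  (forall j : 'I_4, (j < i)%N -> f 'X_j = g 'X_j) -> ifv i p -> f p = g p.
Proof.
move=> hf hg H hp; rewrite (hom_expand _ _ hf) (hom_expand _ _ hg) !big_seq.
apply: eq_bigr => m hm; congr (_ *: _); apply: eq_bigr => j _.
case: (ltnP j i) => hj; first by rewrite H.
by rewrite (hp m hm j hj) !expr0.
Qed.

Lemma hom_uniq f g : kalg_hom f -> kalg_hom g ->
  (forall j : 'I_4, f 'X_j = g 'X_j) -> forall p, f p = g p.
Proof. by move=> hf hg H p; apply: (@hom_agree f g 4) => //; apply: ifv4. Qed.

Lemma hom_ifv f j p : kalg_hom f ->
  (forall i : 'I_4, (i < j)%N -> ifv j (f 'X_i)) -> ifv j p -> ifv j (f p).
Proof.
move=> hf H hp; rewrite (hom_expand _ _ hf) big_seq.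
apply: (big_ind (fun q => ifv j q)); [exact: ifv0 | exact: ifvD|].
move=> m hm; apply: ifvZ.
apply: (big_ind (fun q => ifv j q)); [exact: ifv1 | exact: ifvM|].
move=> i _; case: (ltnP i j) => hi; first by apply: ifvX_pow; apply: H.
by rewrite (hp m hm i hi) expr0; apply: ifv1.
Qed.

Lemma cm_hom (lq : 4.-tuple (P4 k)) : kalg_hom (comp_mpoly lq).
Proof.
split.
- exact: comp_mpolyD.
- by move=> p q; rewrite rmorphM.
- exact: comp_mpoly1.
- by move=> c p; rewrite comp_mpolyZ.
Qed.

Lemma hom_comp f g : kalg_hom f -> kalg_hom g -> kalg_hom (fun p => f (g p)).
Proof.
rewrite /kalg_hom; case=> fD fM f1 fZ [gD gM g1 gZ]; split.
- by move=> p q; rewrite gD fD.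
- by move=> p q; rewrite gM fM.
- by rewrite g1 f1.
- by move=> c p; rewrite gZ fZ.
Qed.

Lemma hom_id : kalg_hom (fun p : P4 k => p).
Proof. by split. Qed.


Lemma ord4 (j : 'I_4) : [\/ j = 0, j = 1, j = 2 | j = 3].
Proof.
case: j => [[|[|[|[|n]]]] hj]; [apply: Or41|apply: Or42|apply: Or43|apply: Or44|by []];
  by apply: val_inj.
Qed.

Lemma homB f p q : kalg_hom f -> f (p - q) = f p - f q.
Proof.
move=> hf; have [fD _ _ fZ] := hf.
by rewrite fD -scaleN1r fZ scaleN1r.
Qed.

Lemma ifvN j p : ifv j p -> ifv j (- p).
Proof. by move=> h; rewrite -scaleN1r; apply: ifvZ. Qed.

Definition cm4 (a b c d : P4 k) := comp_mpoly [tuple a; b; c; d].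
Lemma cm4X0 a b c d : cm4 a b c d 'X_0 = a. Proof. by rewrite /cm4 comp_mpolyXU. Qed.
Lemma cm4X1 a b c d : cm4 a b c d 'X_1 = b. Proof. by rewrite /cm4 comp_mpolyXU. Qed.
Lemma cm4X2 a b c d : cm4 a b c d 'X_2 = c. Proof. by rewrite /cm4 comp_mpolyXU. Qed.
Lemma cm4X3 a b c d : cm4 a b c d 'X_3 = d. Proof. by rewrite /cm4 comp_mpolyXU. Qed.
Lemma cm4_hom a b c d : kalg_hom (cm4 a b c d). Proof. exact: cm_hom. Qed.

Lemma foo (j : 'I_4) : (j < 1)%N -> j = 0.
Proof. by case: (ord4 j) => ->. Qed.

Variable char2 : 2%N \in [pchar k].

Lemma addxx (x : P4 k) : x + x = 0.
Proof. by rewrite -mulr2n -scaler_nat (pcharf0 char2) scale0r. Qed.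

Lemma oppP (x : P4 k) : - x = x.
Proof. by apply/eqP; rewrite eq_sym -addr_eq0 addxx. Qed.

Lemma tau_step (tau : P4 k -> P4 k) (i : 'I_4) (l : k) (q : P4 k) :
  kalg_hom tau -> involution tau -> tau 'X_i = l *: 'X_i + q -> ifv i q ->
  (forall j : 'I_4, (j < i)%N -> ifv i (tau 'X_j)) -> l = 1 /\ tau q = q.
Proof.
move=> hf hinv e hfi H.
have [fD fM f1 fZ] := hf.
have tf : ifv i (tau q) by apply: hom_ifv.
have e2 : (1 - l * l) *: 'X_i = l *: q + tau q.
  have := hinv 'X_i; rewrite {1}e fD fZ e scalerDr scalerA -addrA => e'.
  by rewrite scalerBl scale1r -{1}e' (addrC ((l * l) *: 'X_i)) addrK.
have hr : ifv i (l *: q + tau q) by apply: ifvD => //; apply: ifvZ.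
case: (eqVneq (1 - l * l) 0) => h0; last first.
  exfalso; apply: (@ifvX_not i).
  have -> : 'X_i = (1 - l * l)^-1 *: ((1 - l * l) *: 'X_i) :> P4 k
    by rewrite scalerA mulVf // scale1r.
  by rewrite e2; apply: ifvZ.
have hl : l = 1.
  have : (l - 1) * (l - 1) = 0.
    rewrite (_ : (l - 1) * (l - 1) = - (1 - l * l) - (l - 1) * 2%:R); last by ring.
    by rewrite h0 (pcharf0 char2) mulr0 oppr0 addr0.
  by move/eqP; rewrite mulf_eq0 orbb subr_eq0 => /eqP.
split => //.
move: e2; rewrite h0 scale0r hl scale1r => /esym/eqP; rewrite addr_eq0 => /eqP hf'.
by rewrite {2}hf' oppP.
Qed.

Lemma ord_lt1 (j : 'I_4) : (j < 1)%N -> j = 0.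
Proof. by case: (ord4 j) => ->. Qed.
Lemma ord_lt2 (j : 'I_4) : (j < 2)%N -> j = 0 \/ j = 1.
Proof. by case: (ord4 j) => ->; auto. Qed.
Lemma ord_lt3 (j : 'I_4) : (j < 3)%N -> [\/ j = 0, j = 1 | j = 2].
Proof. by case: (ord4 j) => -> // _; [apply: Or31|apply: Or32|apply: Or33]. Qed.

Lemma step1 (tau : P4 k -> P4 k) (c : k) (f2 f3 f4 : P4 k) :
  kalg_hom tau -> ifv 1 f2 -> ifv 2 f3 -> ifv 3 f4 ->
  tau 'X_0 = 'X_0 + c%:MP -> tau 'X_1 = 'X_1 + f2 ->
  tau 'X_2 = 'X_2 + f3 -> tau 'X_3 = 'X_3 + f4 -> tau f2 = f2 ->
  exists phi phiinv : P4 k -> P4 k,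
    [/\ kalg_hom phi, kalg_hom phiinv, cancel phi phiinv, cancel phiinv phi &
    exists g2 g3 g4 : P4 k, [/\ ifv 1 g2, ifv 2 g3, ifv 3 g4 &
      [/\ phiinv (tau (phi 'X_0)) = 'X_0,
          phiinv (tau (phi 'X_1)) = 'X_1 + g2,
          phiinv (tau (phi 'X_2)) = 'X_2 + g3 &
          phiinv (tau (phi 'X_3)) = 'X_3 + g4]]].
Proof.
move=> ht h2 h3 h4 e0 e1 e2 e3 tf2.
have [tD tM t1 tZ] := ht.
case: (eqVneq c 0) => [c0|hc].
  exists (fun p => p), (fun p => p); split; [exact: hom_id|exact: hom_id|by []|by []|].
  exists f2, f3, f4; split => //; split => //.
  by rewrite e0 c0 mpolyC0 addr0.
pose s := cm4 'X_1 'X_0 'X_2 'X_3.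
pose u := 'X_1 + c^-1 *: ('X_0 * f2).
pose phi := cm4 u 'X_0 'X_2 'X_3.
pose phiinv := cm4 'X_1 ('X_0 - c^-1 *: ('X_1 * s f2)) 'X_2 'X_3.
have hs : kalg_hom s by apply: cm4_hom.
have hphi : kalg_hom phi by apply: cm4_hom.
have hpi : kalg_hom phiinv by apply: cm4_hom.
have [pD pM p1 pZ] := hphi.
have [qD qM q1 qZ] := hpi.
have sf2 : phi (s f2) = f2.
  apply: (@hom_agree (fun p => phi (s p)) (fun p => p) 1 f2 (hom_comp _ _ hphi hs) hom_id) => //.
  by move=> j /ord_lt1 ->; rewrite /s cm4X0 /phi cm4X1.
have if2 : phiinv f2 = s f2.
  apply: (@hom_agree phiinv s 1) => //.
  by move=> j /ord_lt1 ->; rewrite /s /phiinv !cm4X0.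
have c1 : cancel phi phiinv.
  move=> p; apply: (@hom_uniq (fun p => phiinv (phi p)) (fun p => p) (hom_comp _ _ hpi hphi) hom_id).
  move=> j; case: (ord4 j) => ->; rewrite /phi ?cm4X0 ?cm4X1 ?cm4X2 ?cm4X3.
  + by rewrite /u qD qZ qM if2 /phiinv cm4X0 cm4X1 subrK.
  + by rewrite /phiinv cm4X0.
  + by rewrite /phiinv cm4X2.
  + by rewrite /phiinv cm4X3.
have c2 : cancel phiinv phi.
  move=> p; apply: (@hom_uniq (fun p => phi (phiinv p)) (fun p => p) (hom_comp _ _ hphi hpi) hom_id).
  move=> j; case: (ord4 j) => ->; rewrite /phiinv ?cm4X0 ?cm4X1 ?cm4X2 ?cm4X3.
  + by rewrite /phi cm4X1.
  + by rewrite (homB _ _ _ hphi) pZ pM sf2 /phi cm4X0 cm4X1 /u addrK.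
  + by rewrite /phi cm4X2.
  + by rewrite /phi cm4X3.
have tu : tau (phi 'X_0) = phi 'X_0.
  rewrite /phi cm4X0 /u tD tZ tM e0 e1 tf2 mulrDl scalerDr mul_mpolyC scalerA mulVf //.
  by rewrite scale1r -addrA (addrCA f2) addxx addr0.
have hpv2 : forall j : 'I_4, (j < 2)%N -> ifv 2 (phiinv 'X_j).
  move=> j /ord_lt2 [] ->; rewrite /phiinv ?cm4X0 ?cm4X1; first by apply: ifvX.
  apply: ifvD; first by apply: ifvX.
  apply: ifvN; apply: ifvZ; apply: ifvM; first by apply: ifvX.
  apply: hom_ifv => //; last by apply: (@ifv_mono 1 2 f2 isT h2).
  by move=> j' /ord_lt2 [] ->; rewrite /s ?cm4X0 ?cm4X1; apply: ifvX.
exists phi, phiinv; split => //.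
exists c%:MP, (phiinv f3), (phiinv f4); split.
- exact: ifvC.
- by apply: hom_ifv.
- apply: hom_ifv => //.
  move=> j /ord_lt3 [] ->; rewrite /phiinv ?cm4X2; try by apply: ifvX.
  + by apply: (@ifv_mono 2 3 _ isT (hpv2 0 isT)).
  + by apply: (@ifv_mono 2 3 _ isT (hpv2 1 isT)).
split.
- by rewrite tu c1.
- by rewrite /phi cm4X1 e0 qD (homC _ _ hpi) /phiinv cm4X0.
- by rewrite /phi cm4X2 e2 qD /phiinv cm4X2.
- by rewrite /phi cm4X3 e3 qD /phiinv cm4X3.
Qed.

Lemma step2 (tau phi phiinv : P4 k -> P4 k) (g2 g3 g4 : P4 k) :
  kalg_hom phi -> kalg_hom phiinv -> cancel phi phiinv -> cancel phiinv phi ->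
  ifv 1 g2 -> ifv 2 g3 -> ifv 3 g4 ->
  phiinv (tau (phi 'X_0)) = 'X_0 -> phiinv (tau (phi 'X_1)) = 'X_1 + g2 ->
  phiinv (tau (phi 'X_2)) = 'X_2 + g3 -> phiinv (tau (phi 'X_3)) = 'X_3 + g4 ->
  exists (phi phiinv : {mpoly k[4]} -> {mpoly k[4]}),
    [/\ kalg_aut phi, cancel phi phiinv, cancel phiinv phi &
    exists (g2 g3 g4 : {mpoly k[4]}),
      [/\ in_first_vars 1 g2, in_first_vars 2 g3, in_first_vars 3 g4,
          [/\ phiinv (tau (phi 'X_0)) = 'X_0,
              phiinv (tau (phi 'X_1)) = 'X_1 + g2,
              phiinv (tau (phi 'X_2)) = 'X_2 + g3 &
              phiinv (tau (phi 'X_3)) = 'X_3 + g4] &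
          [\/ g2 = 0 /\ g3 = 0, g2 = 0 /\ g3 != 0 | g2 != 0 /\ g3 != 0]]].
Proof.
move=> hphi hpi c1 c2 i2 i3 i4 e0 e1 e2 e3.
case: (boolP ((g2 != 0) && (g3 == 0))) => hcase; last first.
  exists phi, phiinv; split => //; first by split => //; apply: (Bijective c1 c2).
  exists g2, g3, g4; split => //.
  move: hcase; case: eqP => [->|/eqP h2] /=; case: eqP => [->|/eqP h3] //= _.
  + by apply: Or31.
  + by apply: Or32.
  + by apply: Or33.
move/andP: hcase => [hg2 /eqP hg3].
pose s := cm4 'X_0 'X_2 'X_1 'X_3.
have hs : kalg_hom s by apply: cm4_hom.
have [sD sM s1 sZ] := hs.
have ss : cancel s s.
  move=> p; apply: (@hom_uniq (fun p => s (s p)) (fun p => p) (hom_comp _ _ hs hs) hom_id).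
  by move=> j; case: (ord4 j) => ->; rewrite /s ?cm4X0 ?cm4X1 ?cm4X2 ?cm4X3 ?cm4X0 ?cm4X1 ?cm4X2 ?cm4X3.
have d1 : cancel (fun p => phi (s p)) (fun p => s (phiinv p)).
  by move=> p /=; rewrite c1 ss.
have d2 : cancel (fun p => s (phiinv p)) (fun p => phi (s p)).
  by move=> p /=; rewrite ss c2.
exists (fun p => phi (s p)), (fun p => s (phiinv p)); split => //.
  split; [exact: hom_comp | exact: (Bijective d1 d2)].
exists 0, (s g2), (s g4); split.
- exact: ifv0.
- apply: (@ifv_mono 1 2 _ isT); apply: hom_ifv => //.
  by move=> j /ord_lt1 ->; rewrite /s cm4X0; apply: ifvX.
- apply: hom_ifv => //.
  by move=> j /ord_lt3 [] ->; rewrite /s ?cm4X0 ?cm4X1 ?cm4X2; apply: ifvX.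
- split.
  + by rewrite /s cm4X0 e0 cm4X0.
  + by rewrite /s cm4X1 e2 hg3 addr0 cm4X2 addr0.
  + by rewrite {2}/s cm4X2 e1 sD /s cm4X1.
  + by rewrite {2}/s cm4X3 e3 sD /s cm4X3.
- apply: Or32; split => //; apply/eqP => h; move/eqP: hg2; apply.
  by rewrite -(ss g2) h (hom0 _ hs).
Qed.

End Aux.

Theorem lemma2 (k : fieldType) (char2 : 2%N \in [pchar k])
  (tau : {mpoly k[4]} -> {mpoly k[4]})
  (Htri : triangular tau) (Hinv : involution tau) :
  exists (phi phiinv : {mpoly k[4]} -> {mpoly k[4]}),
    [/\ kalg_aut phi, cancel phi phiinv, cancel phiinv phi &
    exists (g2 g3 g4 : {mpoly k[4]}),
      [/\ in_first_vars 1 g2, in_first_vars 2 g3, in_first_vars 3 g4,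
          [/\ phiinv (tau (phi 'X_0)) = 'X_0,
              phiinv (tau (phi 'X_1)) = 'X_1 + g2,
              phiinv (tau (phi 'X_2)) = 'X_2 + g3 &
              phiinv (tau (phi 'X_3)) = 'X_3 + g4] &
          [\/ g2 = 0 /\ g3 = 0, g2 = 0 /\ g3 != 0 | g2 != 0 /\ g3 != 0]]].
Proof.
case: Htri => [[ht _] [l1 [l2 [l3 [l4 [c1 [f2 [f3 [f4 [_ [i2 i3 i4] [e1 e2 e3 e4]]]]]]]]]]].
have t0 : in_first_vars 1 (tau 'X_0).
  by rewrite e1; apply: ifvD; [apply: ifvZ; apply: ifvX | apply: ifvC].
have t1 : in_first_vars 2 (tau 'X_1).
  by rewrite e2; apply: ifvD; [apply: ifvZ; apply: ifvX | apply: (@ifv_mono _ 1 2 _ isT)].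
have t2 : in_first_vars 3 (tau 'X_2).
  by rewrite e3; apply: ifvD; [apply: ifvZ; apply: ifvX | apply: (@ifv_mono _ 2 3 _ isT)].
have [hl1 _] := @tau_step k char2 tau 0 l1 _ ht Hinv e1 (ifvC _ _ _)
  (fun j hj => ltac:(by case: (ord4 j) hj => ->)).
have [hl2 tf2] := @tau_step k char2 tau 1 l2 f2 ht Hinv e2 i2
  (fun j hj => ltac:(by move: hj => /ord_lt1 ->)).
have [hl3 _] := @tau_step k char2 tau 2 l3 f3 ht Hinv e3 i3
  (fun j hj => ltac:(by move: hj => /ord_lt2 [] ->; [apply: (@ifv_mono _ 1 2 _ isT)|])).
have [hl4 _] := @tau_step k char2 tau 3 l4 f4 ht Hinv e4 i4
  (fun j hj => ltac:(by move: hj => /ord_lt3 [] ->;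
      [apply: (@ifv_mono _ 1 3 _ isT)|apply: (@ifv_mono _ 2 3 _ isT)|])).
rewrite hl1 hl2 hl3 hl4 !scale1r in e1 e2 e3 e4.
have [phi [phiinv [hp hpi cc1 cc2 [g2 [g3 [g4 [j2 j3 j4 [d0 d1 d2 d3]]]]]]]] :=
  @step1 k char2 tau c1 f2 f3 f4 ht i2 i3 i4 e1 e2 e3 e4 tf2.
exact: (@step2 k tau phi phiinv g2 g3 g4 hp hpi cc1 cc2 j2 j3 j4 d0 d1 d2 d3).
Qed.
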